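(* Let $\vec G$ be a connected digraph on a linearly ordered edge set $E$, bipolar with respect to $p=\min(E)$, let $\omega=\max(E)$ and $T=\alpha(\vec G)$. If $\omega\in T$, then $\vec G/\omega$ is bipolar w.r.t. $p$ and $T\setminus\{\omega\}=\alpha(\vec G/\omega)$. If $\omega\notin T$, then $\vec G\setminus\omega$ is bipolar w.r.t. $p$ and $T=\alpha(\vec G\setminus\omega)$. In particular, $\vec G/\omega$ or $\vec G\setminus\omega$ is bipolar w.r.t. $p$.
   Context: Graphs are finite, loops and multiple edges allowed; cycles and cocycles (inclusion-minimal nonempty edge cuts) are edge subsets. $\vec G/\omega$ and $\vec G\setminus\omega$ denote contraction and deletion of $\omega$, with inherited orientations and order. For a spanning tree $T$ and $t\in T$, $C^*(T;t)$ is the unique cocycle contained in $(E\setminus T)\cup\{t\}$; for $e\notin T$, $C(T;e)$ is the unique cycle contained in $T\cup\{e\}$. In a digraph, a cycle gives two opposite signed cycles (fix a traversal direction; forward edges positive, backward negative), and a cocycle between vertex sides $(X,V\setminus X)$ gives two opposite signed cocycles (edges from $X$ to $V\setminus X$ positive, others negative); fundamental cycles/cocycles are signed so that $e$ (resp. $t$) is positive. A digraph is bipolar w.r.t. $p$ if it is acyclic and has a unique source and a unique sink, which are the endpoints of $p$ (a single isthmus edge $p$ counts as bipolar). For $\vec G$ bipolar w.r.t. $p=\min(E)$, the fully optimal spanning tree $\alpha(\vec G)$ is the unique spanning tree $T$ such that for all $b\in T\setminus\{p\}$, $b$ and $\min(C^*(T;b))$ have opposite signs in $C^*(T;b)$,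 and for all $e\in E\setminus T$, $e$ and $\min(C(T;e))$ have opposite signs in $C(T;e)$ (existence and uniqueness is a known theorem). *)

(* Defs.v *)
From mathcomp Require Import all_boot all_order.
Set Implicit Arguments. Unset Strict Implicit. Unset Printing Implicit Defensive.
Import Order.TTheory.
Local Open Scope order_scope.

Section Digraphs.
Variables (V : finType) (d : Order.disp_t) (E : finOrderType d).

Record digraph := Digraph {
  vset : {set V};
  eset : {set E};
  src : E -> V;
  tgt : E -> V }.

Definition wf (G : digraph) :=
  forall e, e \in eset G -> src G e \in vset G /\ tgt G e \in vset G.

Definition is_min (A : {set E}) (x : E) := x \in A /\ forall y, y \in A -> x <= y.
Definition is_max (A : {set E}) (x : E) := x \in A /\ forall y, y \in A -> y <= x.

Definition adj (G : digraph) (S : {set E}) : rel V :=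
  fun u v => [exists e in S, ((src G e == u) && (tgt G e == v))
                          || ((src G e == v) && (tgt G e == u))].

Definition connected_via (G : digraph) (S : {set E}) :=
  forall u v, u \in vset G -> v \in vset G -> connect (adj G S) u v.

Definition connected (G : digraph) := connected_via G (eset G).

(* Cycles as closed traversals: a step (e, b) traverses edge e forwards
   (from src to tgt) if b = true, backwards otherwise. *)
Definition st_start (G : digraph) (x : E * bool) := if x.2 then src G x.1 else tgt G x.1.
Definition st_end (G : digraph) (x : E * bool) := if x.2 then tgt G x.1 else src G x.1.

Definition is_cycle_trav (G : digraph) (s : seq (E * bool)) :=
  [/\ s != [::], all (fun x => x.1 \in eset G) s, uniq (map fst s),
      uniq (map (st_start G) s) & map (st_end G) s = map (st_start G) (rot 1 s)].

Definition cyc_edges (s : seq (E * bool)) : {set E} := [set e | e \in map fst s].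

(* sign of edge e in the signed cycle given by the traversal s *)
Definition cyc_pos (s : seq (E * bool)) (e : E) := (e, true) \in s.

Definition has_directed_cycle (G : digraph) :=
  exists s, is_cycle_trav G s /\ all snd s.

Definition is_source (G : digraph) (v : V) :=
  v \in vset G /\ forall e, e \in eset G -> tgt G e != v.
Definition is_sink (G : digraph) (v : V) :=
  v \in vset G /\ forall e, e \in eset G -> src G e != v.

Definition bipolar (G : digraph) (p : E) :=
  [/\ p \in eset G, ~ has_directed_cycle G &
      exists s t, (forall v, is_source G v <-> v = s) /\
                  (forall v, is_sink G v <-> v = t) /\
                  ((s = src G p /\ t = tgt G p) \/ (s = tgt G p /\ t = src G p))].

Definition spanning_tree (G : digraph) (T : {set E}) :=
  [/\ T \subset eset G, connected_via G T &
      forall s, is_cycle_trav G s -> ~ (cyc_edges s \subset T)].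

Definition cut (G : digraph) (X : {set V}) : {set E} :=
  [set e in eset G | (src G e \in X) != (tgt G e \in X)].

Definition is_cocycle_side (G : digraph) (X : {set V}) :=
  cut G X != set0 /\
  forall Y : {set V}, cut G Y != set0 -> cut G Y \subset cut G X -> cut G Y = cut G X.

(* sign of an edge e of cut G X in the signed cocycle (X, V \ X) *)
Definition cut_pos (G : digraph) (X : {set V}) (e : E) := src G e \in X.

Definition fully_optimal (G : digraph) (T : {set E}) :=
  spanning_tree G T /\
  forall p, is_min (eset G) p ->
  (forall b, b \in T -> b != p ->
     (* C^*(T;b) = cut G X, the unique cocycle in (E \ T) u {b} *)
     forall X : {set V}, is_cocycle_side G X ->
       cut G X \subset (eset G :\: T) :|: [set b] ->
       forall f, is_min (cut G X) f -> cut_pos G X b != cut_pos G X f) /\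
  (forall e, e \in eset G :\: T ->
     (* C(T;e) = cyc_edges s, the unique cycle in T u {e} *)
     forall s, is_cycle_trav G s -> cyc_edges s \subset T :|: [set e] ->
       forall f, is_min (cyc_edges s) f -> cyc_pos s e != cyc_pos s f).

Definition delete (G : digraph) (w : E) : digraph :=
  Digraph (vset G) (eset G :\ w) (src G) (tgt G).

Definition contract (G : digraph) (w : E) : digraph :=
  let u := src G w in let v := tgt G w in
  let f := fun x => if x == u then v else x in
  Digraph (if u == v then vset G else vset G :\ u) (eset G :\ w)
          (fun e => f (src G e)) (fun e => f (tgt G e)).

End Digraphs.

(* Main.v *)
Require Import Defs.
From mathcomp Require Import all_boot all_order.
From mathcomp Require Import zify.
Set Implicit Arguments. Unset Strict Implicit. Unset Printing Implicit Defensive.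
Import Order.TTheory.

Lemma count_split (A : Type) (P Q : pred A) s :
  count (fun x => P x && ~~ Q x) s + count (fun x => P x && Q x) s = count P s.
Proof. elim: s => //= x s <-; case: (P x); case: (Q x) => /=; lia. Qed.

Lemma count_rot1 (A : Type) (P : pred A) s : count P (rot 1 s) = count P s.
Proof. by rewrite /rot count_cat addnC -count_cat cat_take_drop. Qed.

Lemma bool_cyc (a : seq bool) :
  count (fun q : bool * bool => q.1 && ~~ q.2) (zip a (rot 1 a)) =
  count (fun q : bool * bool => ~~ q.1 && q.2) (zip a (rot 1 a)).
Proof.
have sz : size a = size (rot 1 a) by rewrite size_rot.
have h1 := count_split (fun q : bool*bool => q.1) (fun q => q.2) (zip a (rot 1 a)).
have h2 := count_split (fun q : bool*bool => q.2) (fun q => q.1) (zip a (rot 1 a)).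
have e1 : count (fun q : bool*bool => q.1) (zip a (rot 1 a)) = count id a.
  have -> : count (fun q : bool*bool => q.1) (zip a (rot 1 a)) = count id (unzip1 (zip a (rot 1 a))) by rewrite count_map.
  by rewrite unzip1_zip ?sz.
have e2 : count (fun q : bool*bool => q.2) (zip a (rot 1 a)) = count id a.
  have -> : count (fun q : bool*bool => q.2) (zip a (rot 1 a)) = count id (unzip2 (zip a (rot 1 a))) by rewrite count_map.
  by rewrite unzip2_zip ?sz // count_rot1.
have e3 : count (fun q : bool*bool => q.1 && q.2) (zip a (rot 1 a)) =
          count (fun q : bool*bool => q.2 && q.1) (zip a (rot 1 a)).
  by apply: eq_count => q; rewrite andbC.
have e4 : count (fun q : bool*bool => ~~ q.1 && q.2) (zip a (rot 1 a)) =
          count (fun q : bool*bool => q.2 && ~~ q.1) (zip a (rot 1 a)).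
  by apply: eq_count => q; rewrite andbC.
rewrite e4; lia.
Qed.

Section Gen.
Variables (V : finType) (d : Order.disp_t) (E : finOrderType d).
Implicit Types (H : digraph V E) (X : {set V}) (S T : {set E}).

Definition closed_walk H (s : seq (E * bool)) :=
  map (st_end H) s = map (st_start H) (rot 1 s).
Definition leaves H X (x : E * bool) := (st_start H x \in X) && (st_end H x \notin X).
Definition enters H X (x : E * bool) := (st_start H x \notin X) && (st_end H x \in X).

Lemma orth H X s : closed_walk H s -> count (leaves H X) s = count (enters H X) s.
Proof.
move=> cw.
have := bool_cyc [seq st_start H x \in X | x <- s].
have -> : rot 1 [seq st_start H x \in X | x <- s] = [seq st_end H x \in X | x <- s].
  by rewrite (map_comp (fun v => v \in X) (st_end H)) cw -map_rot -map_comp.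
rewrite zip_map !count_map.
by congr (_ = _); apply: eq_count => x.
Qed.

Lemma leavesE H X x : x.1 \in eset H ->
  leaves H X x = (x.1 \in cut H X) && (x.2 == cut_pos H X x.1).
Proof.
case: x => e [] /= he; rewrite /leaves /st_start /st_end /cut /cut_pos inE he /=;
by case: (src H e \in X); case: (tgt H e \in X).
Qed.

Lemma entersE H X x : x.1 \in eset H ->
  enters H X x = (x.1 \in cut H X) && (x.2 != cut_pos H X x.1).
Proof.
case: x => e [] /= he; rewrite /enters /st_start /st_end /cut /cut_pos inE he /=;
by case: (src H e \in X); case: (tgt H e \in X).
Qed.

Lemma uniq_fst_eq (s : seq (E * bool)) a b1 b2 :
  uniq (map fst s) -> (a, b1) \in s -> (a, b2) \in s -> b1 = b2.
Proof.
elim: s => //= y s IH /andP[ny us]; rewrite !inE.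
case/orP=> [/eqP e1|h1]; case/orP=> [/eqP e2|h2].
- by rewrite -e1 in e2; case: e2.
- by move: ny; rewrite -e1 /=; move/negP; case; apply/mapP; exists (a, b2).
- by move: ny; rewrite -e2 /=; move/negP; case; apply/mapP; exists (a, b1).
- exact: IH.
Qed.

Lemma cyc_posE (s : seq (E * bool)) a b :
  uniq (map fst s) -> (a, b) \in s -> cyc_pos s a = b.
Proof.
move=> us h; rewrite /cyc_pos; case: b h => h //.
by apply/negP => h'; have := uniq_fst_eq us h h'.
Qed.

Lemma in_cyc_edges (s : seq (E * bool)) a :
  a \in cyc_edges s -> exists b, (a, b) \in s.
Proof. by rewrite inE => /mapP[[e b] h /= ->]; exists b. Qed.

Lemma in_cyc_edges2 (s : seq (E * bool)) a b : (a, b) \in s -> a \in cyc_edges s.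
Proof. by move=> h; rewrite inE; apply/mapP; exists (a, b). Qed.

Lemma count_one (s : seq (E * bool)) a b (P : pred (E * bool)) :
  uniq (map fst s) -> (a, b) \in s ->
  count (fun x => (x.1 == a) && P x) s = P (a, b).
Proof.
elim: s => //= y s IH /andP[ny us]; rewrite inE.
case/orP=> [/eqP e1|h1].
- subst y; rewrite /= eqxx /=.
  have -> : count (fun x => (x.1 == a) && P x) s = 0.
    apply/eqP; rewrite -leqn0 leqNgt -has_count; apply/hasPn => x xs /=.
    apply/negP => /andP[/eqP ex _]; move: ny => /negP; case; apply/mapP; exists x => //.
  by rewrite addn0.
- rewrite IH //.
  case: (eqVneq y.1 a) => [ey|]; last by rewrite /= add0n.
  by move: ny => /negP; case; rewrite ey; apply/mapP; exists (a, b).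
Qed.

Lemma count_two (s : seq (E * bool)) a c (P : pred (E * bool)) : a != c ->
  count (fun x => ((x.1 == a) || (x.1 == c)) && P x) s =
  count (fun x => (x.1 == a) && P x) s + count (fun x => (x.1 == c) && P x) s.
Proof.
move=> ac; elim: s => //= y s ->.
case: (eqVneq y.1 a) => [ea|na]; case: (eqVneq y.1 c) => [ec|nc] /=; try lia.
by move: ac; rewrite -ea -ec eqxx.
Qed.

Definition cyc_ok H s := [/\ all (fun x => x.1 \in eset H) s, uniq (map fst s) & closed_walk H s].

Lemma cycle_ok H s : is_cycle_trav H s -> cyc_ok H s.
Proof. by case=> _ ? ? _ ?; split. Qed.

Lemma cross_one H X s b : cyc_ok H s ->
  cyc_edges s :&: cut H X = [set b] -> False.
Proof.
case=> ae us cw hK.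
have hb : b \in cyc_edges s :&: cut H X by rewrite hK set11.
move: (hb); rewrite inE => /andP[/in_cyc_edges[bb hbs] bc].
have key : forall Q : pred (E * bool), count (fun x => (x.1 \in cut H X) && Q x) s =
                   Q (b, bb).
  move=> Q; rewrite -(count_one Q us hbs); apply: eq_in_count => x xs.
  have : (x.1 \in cut H X) = (x.1 \in cyc_edges s :&: cut H X).
    have hx : x.1 \in cyc_edges s by apply: (in_cyc_edges2 (b:=x.2)); case: x xs.
    by rewrite in_setI hx.
  by move=> ->; rewrite hK inE.
have := orth X cw.
have e1 : count (leaves H X) s = count (fun x => (x.1 \in cut H X) && (x.2 == cut_pos H X x.1)) s.
  by apply: eq_in_count => x xs; rewrite leavesE //; move/allP: ae => /(_ x xs).
have e2 : count (enters H X) s = count (fun x => (x.1 \in cut H X) && (x.2 != cut_pos H X x.1)) s.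
  by apply: eq_in_count => x xs; rewrite entersE //; move/allP: ae => /(_ x xs).
rewrite e1 e2 !key /=.
by case: (bb == cut_pos H X b).
Qed.

Lemma cross_two H X s a c : cyc_ok H s -> a != c ->
  cyc_edges s :&: cut H X = [set a; c] ->
  (cyc_pos s a == cyc_pos s c) = (cut_pos H X a != cut_pos H X c).
Proof.
case=> ae us cw ac hK.
have ha : a \in cyc_edges s :&: cut H X by rewrite hK !inE eqxx.
have hc : c \in cyc_edges s :&: cut H X by rewrite hK !inE eqxx orbT.
move: ha hc; rewrite !in_setI => /andP[/in_cyc_edges[ba has] _] /andP[/in_cyc_edges[bc hcs] _].
rewrite (cyc_posE us has) (cyc_posE us hcs).
have key : forall Q : pred (E * bool), count (fun x => (x.1 \in cut H X) && Q x) s =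
                   Q (a, ba) + Q (c, bc).
  move=> Q; rewrite -(count_one Q us has) -(count_one Q us hcs) -count_two //.
  apply: eq_in_count => x xs.
  have : (x.1 \in cut H X) = (x.1 \in cyc_edges s :&: cut H X).
    have hx : x.1 \in cyc_edges s by apply: (in_cyc_edges2 (b:=x.2)); case: x xs.
    by rewrite in_setI hx.
  by move=> ->; rewrite hK !inE.
have := orth X cw.
have e1 : count (leaves H X) s = count (fun x => (x.1 \in cut H X) && (x.2 == cut_pos H X x.1)) s.
  by apply: eq_in_count => x xs; rewrite leavesE //; move/allP: ae => /(_ x xs).
have e2 : count (enters H X) s = count (fun x => (x.1 \in cut H X) && (x.2 != cut_pos H X x.1)) s.
  by apply: eq_in_count => x xs; rewrite entersE //; move/allP: ae => /(_ x xs).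
rewrite e1 e2 !key /=.
clear has hcs key e1 e2; by case: ba; case: bc; case: (cut_pos H X a); case: (cut_pos H X c).
Qed.

End Gen.

Section Gen2.
Variables (V : finType) (d : Order.disp_t) (E : finOrderType d).
Implicit Types (H : digraph V E) (X : {set V}) (S T : {set E}).

Lemma ex_min (A : {set E}) : A != set0 -> exists x, is_min A x.
Proof.
case/set0Pn=> i0 hi0.
case: (Order.TotalTheory.arg_minP (fun i : E => i) (P := mem A) hi0) => i hi hmin.
by exists i; split.
Qed.

Lemma is_min_uniq (A : {set E}) x y : is_min A x -> is_min A y -> x = y.
Proof.
by case=> hx mx [hy my]; apply/le_anti; rewrite mx // my.
Qed.

Lemma adjP H S u v : adj H S u v ->
  exists2 e, e \in S & (src H e = u /\ tgt H e = v) \/ (src H e = v /\ tgt H e = u).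
Proof.
case/existsP=> e /andP[eS /orP[/andP[/eqP h1 /eqP h2]|/andP[/eqP h1 /eqP h2]]].
  by exists e => //; left.
by exists e => //; right.
Qed.

Lemma adj_sym H S : symmetric (adj H S).
Proof.
move=> u v; apply/existsP/existsP => [][e /andP[eS h]]; exists e; rewrite eS /=;
by rewrite orbC.
Qed.

Lemma adj1 H S e : e \in S -> adj H S (src H e) (tgt H e).
Proof. by move=> eS; apply/existsP; exists e; rewrite eS !eqxx. Qed.

Lemma adj_sub H S S' u v : S \subset S' -> adj H S u v -> adj H S' u v.
Proof.
move=> sS /existsP[e /andP[eS h]]; apply/existsP; exists e.
by rewrite (subsetP sS) .
Qed.

Lemma connect_adj_sub H S S' u v : S \subset S' ->
  connect (adj H S) u v -> connect (adj H S') u v.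
Proof.
move=> sS; apply: connect_sub => x y h; apply: connect1; exact: adj_sub h.
Qed.

Lemma inv_connect H S (phi : V -> bool) x y :
  (forall g, g \in S -> phi (src H g) = phi (tgt H g)) ->
  connect (adj H S) x y -> phi x = phi y.
Proof.
move=> hinv /connectP[q hq ->]; elim: q x hq => //= z q IH x /andP[hxz hq].
rewrite -(IH z hq); case: (adjP hxz) => g gS [[<- <-]|[<- <-]]; rewrite hinv //.
Qed.

Lemma cc H S X x y : connected_via H S -> x \in vset H -> y \in vset H ->
  x \in X -> y \notin X ->
  exists2 g, g \in S & (src H g \in X) != (tgt H g \in X).
Proof.
move=> cS hx hy xX yX.
case: (boolP [exists g in S, (src H g \in X) != (tgt H g \in X)]).
  by case/existsP=> g /andP[gS h]; exists g.
move/existsPn=> hn; have := inv_connect (phi := fun z => z \in X) _ (cS x y hx hy).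
rewrite xX (negbTE yX) => h; suff: true = false by [].
apply: h => g gS; move: (hn g); rewrite gS /=; by move/negbNE/eqP.
Qed.

Lemma cut_cross H X e : e \in eset H ->
  (e \in cut H X) = ((src H e \in X) != (tgt H e \in X)).
Proof. by move=> he; rewrite inE he. Qed.

Section Tree.
Variables (H : digraph V E) (T : {set E}).
Hypothesis wfH : wf H.
Hypothesis sT : T \subset eset H.
Hypothesis cT : connected_via H T.

Lemma tree_cross X : cut H X != set0 -> exists2 g, g \in T & g \in cut H X.
Proof.
case/set0Pn=> e; rewrite inE => /andP[he hx].
case: (wfH he) => hs ht.
case: (boolP (src H e \in X)) => hsX.
- have htX : tgt H e \notin X by move: hx; rewrite hsX; case: (tgt H e \in X).
  case: (cc cT hs ht hsX htX) => g gT hg; exists g => //.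
  by rewrite inE hg (subsetP sT).
- have htX : tgt H e \in X by move: hx; rewrite (negbTE hsX); case: (tgt H e \in X).
  case: (cc cT ht hs htX hsX) => g gT hg; exists g => //.
  by rewrite inE hg (subsetP sT).
Qed.

Lemma L1 b X Y : b \in T ->
  cut H X != set0 -> cut H X \subset (eset H :\: T) :|: [set b] ->
  cut H Y != set0 -> cut H Y \subset (eset H :\: T) :|: [set b] ->
  cut H X = cut H Y.
Proof.
move=> bT nX sX nY sY.
have bin : forall Z, cut H Z != set0 -> cut H Z \subset (eset H :\: T) :|: [set b] ->
             b \in cut H Z.
  move=> Z nZ sZ; case: (tree_cross nZ) => g gT gZ.
  have : g == b by move: (subsetP sZ g gZ); rewrite !inE gT.
  by move/eqP=> <-.
have bX := bin X nX sX; have bY := bin Y nY sY.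
have hb : forall Z g, g \in T -> g != b -> cut H Z \subset (eset H :\: T) :|: [set b] ->
            (src H g \in Z) = (tgt H g \in Z).
  move=> Z g gT gb sZ; apply/eqP/negPn/negP => hc.
  have : g \in cut H Z by rewrite inE (subsetP sT) // hc.
  by move/(subsetP sZ); rewrite !inE gT (negbTE gb).
have inv : forall z, z \in vset H ->
    addb (z \in X) (z \in Y) = addb (src H b \in X) (src H b \in Y).
  move=> z hz; symmetry; apply: (inv_connect (phi := fun z => addb (z \in X) (z \in Y)) (S := T)); last first.
    by apply: cT => //; case: (wfH (subsetP sT _ bT)).
  move=> g gT; case: (eqVneq g b) => [->|gb].
    move: bX bY; rewrite !inE => /andP[_ hX] /andP[_ hY].
    by case: (src H b \in X) hX; case: (tgt H b \in X);
       case: (src H b \in Y) hY; case: (tgt H b \in Y).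
  by rewrite (hb X g gT gb sX) (hb Y g gT gb sY).
apply/setP => e; rewrite !inE; case: (boolP (e \in eset H)) => //= he.
case: (wfH he) => hs ht; move: (inv _ hs) (inv _ ht).
case: (src H e \in X); case: (tgt H e \in X); case: (src H e \in Y);
case: (tgt H e \in Y); case: (src H b \in X); case: (src H b \in Y) => //.
Qed.

Lemma L1c b X : b \in T ->
  cut H X != set0 -> cut H X \subset (eset H :\: T) :|: [set b] ->
  is_cocycle_side H X.
Proof.
move=> bT nX sX; split=> // Y nY sYX; apply: (L1 bT) => //.
exact: subset_trans sYX sX.
Qed.

End Tree.

Definition pick_adj H S (x y : V) : option E :=
  [pick g in S | ((src H g == x) && (tgt H g == y)) || ((src H g == y) && (tgt H g == x))].
Definition pick_dadj H S (x y : V) : option E :=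
  [pick g in S | (src H g == x) && (tgt H g == y)].

Fixpoint mksteps H (pk : V -> V -> option E) x (q : seq V) : seq (E * bool) :=
  match q with
  | [::] => [::]
  | y :: q' => match pk x y with
               | Some g => (g, src H g == x) :: mksteps H pk y q'
               | None => [::]
               end
  end.

Definition good_pk H S (pk : V -> V -> option E) (r : rel V) :=
  forall x y, r x y -> exists g, pk x y = Some g /\ g \in S /\
     ((src H g = x /\ tgt H g = y) \/ (src H g = y /\ tgt H g = x)).

Lemma good_adj H S : good_pk H S (pick_adj H S) (adj H S).
Proof.
move=> x y /existsP[e /andP[eS he]]; rewrite /pick_adj.
case: pickP => [g /andP[gS /orP[/andP[/eqP h1 /eqP h2]|/andP[/eqP h1 /eqP h2]]]|/(_ e)].
- by exists g; split=> //; split=> //; left.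
- by exists g; split=> //; split=> //; right.
- by rewrite eS he.
Qed.

Definition dadj H : rel V := fun x y => [exists g in eset H, (src H g == x) && (tgt H g == y)].

Lemma good_dadj H : good_pk H (eset H) (pick_dadj H (eset H)) (dadj H).
Proof.
move=> x y /existsP[e /andP[eS he]]; rewrite /pick_dadj.
case: pickP => [g /andP[gS /andP[/eqP h1 /eqP h2]]|/(_ e)].
- by exists g; split=> //; split=> //; left.
- by rewrite eS he.
Qed.

Section Steps.
Variables (H : digraph V E) (S : {set E}) (pk : V -> V -> option E) (r : rel V).
Hypothesis gp : good_pk H S pk r.

Lemma steps_S x q : path r x q -> all (fun z => z.1 \in S) (mksteps H pk x q).
Proof.
elim: q x => //= y q IH x /andP[hxy hq].
case: (gp hxy) => g [-> [gS _]] /=; by rewrite gS IH.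
Qed.

Lemma steps_ends x q : path r x q ->
  map (st_start H) (mksteps H pk x q) = belast x q /\
  map (st_end H) (mksteps H pk x q) = q.
Proof.
elim: q x => //= y q IH x /andP[hxy hq].
case: (gp hxy) => g [-> [gS hg]] /=; case: (IH y hq) => -> ->.
rewrite /st_start /st_end /=.
case: hg => [[h1 h2]|[h1 h2]]; rewrite h1 ?eqxx /=.
- by rewrite h2.
- by case: eqP => [e|_]; rewrite ?e h2.
Qed.

Lemma steps_fwd x q : (forall x y g, pk x y = Some g -> src H g = x) ->
  all snd (mksteps H pk x q).
Proof.
move=> hf; elim: q x => //= y q IH x.
case e: (pk x y) => [g|] //=; by rewrite (hf _ _ _ e) eqxx IH.
Qed.

Lemma steps_verts x q : path r x q -> forall z, z \in mksteps H pk x q ->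
  src H z.1 \in x :: q /\ tgt H z.1 \in x :: q.
Proof.
elim: q x => //= y q IH x /andP[hxy hq] z.
case: (gp hxy) => g [-> [gS hg]] /=; rewrite inE => /orP[/eqP ->|hz] /=.
- by case: hg => [[-> ->]|[-> ->]]; rewrite !inE !eqxx ?orbT.
- case: (IH y hq z hz); rewrite !inE => -> ->; by rewrite !orbT.
Qed.

Lemma steps_uniq x q : path r x q -> uniq (x :: q) -> uniq (map fst (mksteps H pk x q)).
Proof.
elim: q x => //= y q IH x /andP[hxy hq] /andP[xq uq].
case: (gp hxy) => g [-> [gS hg]] /=; rewrite IH // andbT.
apply/mapP => [][z hz ez]; case: (steps_verts hq hz) => hs ht.
have : x \in y :: q.
  by case: hg => [[h1 _]|[_ h2]]; [rewrite -h1 ez | rewrite -h2 ez].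
by move/negP: xq.
Qed.

End Steps.
End Gen2.

Section Gen3.
Variables (V : finType) (d : Order.disp_t) (E : finOrderType d).
Implicit Types (H : digraph V E) (X : {set V}) (S T : {set E}).

Lemma close_walk H S pk r (gp : good_pk H S pk r) e q :
  path r (tgt H e) q -> last (tgt H e) q = src H e ->
  closed_walk H ((e, true) :: mksteps H pk (tgt H e) q).
Proof.
move=> hq hl; rewrite /closed_walk rot1_cons map_rcons /=.
case: (steps_ends gp hq) => -> ->.
by rewrite /st_start /st_end /= -hl -lastI.
Qed.

Lemma path_cycle H S e : S \subset eset H -> e \in eset H -> e \notin S ->
  connect (adj H S) (tgt H e) (src H e) ->
  exists s, [/\ is_cycle_trav H s, cyc_edges s \subset S :|: [set e] & (e, true) \in s].
Proof.
move=> sS he eS /connectP[q hq hl]; move: hl.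
case: (shortenP hq) => q' hq' uq' _ hl.
have gp := @good_adj _ _ _ H S.
set st := mksteps H (pick_adj H S) (tgt H e) q'.
have stS := steps_S gp hq'.
exists ((e, true) :: st); split.
- split => //.
  + rewrite /= he /=; apply: sub_all stS => z /=; exact: (subsetP sS).
  + rewrite /= (steps_uniq gp hq' uq') andbT.
    apply/mapP => [][z hz ez]; move/allP: stS => /(_ z hz) /=; rewrite -ez.
    by move/negP: eS.
  + rewrite /= (proj1 (steps_ends gp hq')) /st_start /=.
    move: uq'; rewrite lastI -hl rcons_uniq => /andP[h1 h2].
    by rewrite h1 h2.
  + by have := close_walk gp hq' (esym hl).
- apply/subsetP => x; rewrite inE => /mapP[z hz ->].
  move: hz; rewrite inE => /orP[/eqP -> |hz]; first by rewrite !inE eqxx orbT.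
  by move/allP: stS => /(_ z hz) /= zS; rewrite inE zS.
- exact: mem_head.
Qed.

Definition Xf H T b := [set z | connect (adj H (T :\ b)) (src H b) z].

Section Tree3.
Variables (H : digraph V E) (T : {set E}).
Hypothesis wfH : wf H.
Hypothesis stT : spanning_tree H T.

Let sT : T \subset eset H. Proof. by case: stT. Qed.
Let cT : connected_via H T. Proof. by case: stT. Qed.
Let aT : forall s, is_cycle_trav H s -> ~ (cyc_edges s \subset T). Proof. by case: stT. Qed.

Lemma fund_cocycle b : b \in T ->
  [/\ b \in cut H (Xf H T b), cut H (Xf H T b) \subset (eset H :\: T) :|: [set b]
    & is_cocycle_side H (Xf H T b)].
Proof.
move=> bT.
have inv : forall g, g \in T :\ b -> (src H g \in Xf H T b) = (tgt H g \in Xf H T b).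
  move=> g gT; rewrite !inE; apply/idP/idP => h.
  - by apply: connect_trans h (connect1 (adj1 H gT)).
  - by apply: connect_trans h (connect1 _); rewrite adj_sym; apply: adj1.
have hb : b \in cut H (Xf H T b).
  rewrite inE (subsetP sT _ bT) /= !inE connect0 /=.
  apply/negP => hc.
  have hc' : connect (adj H (T :\ b)) (tgt H b) (src H b).
    by rewrite (sym_connect_sym (adj_sym H (T :\ b))).
  case: (path_cycle _ (subsetP sT _ bT) _ hc').
  - by apply: subset_trans (subsetDl T [set b]) sT.
  - by rewrite !inE eqxx.
  move=> s [hs hsub _]; apply: (aT hs); apply: subset_trans hsub _.
  by apply/subsetP => x; rewrite !inE => /orP[/andP[_ ->]|/eqP ->].
have hsub : cut H (Xf H T b) \subset (eset H :\: T) :|: [set b].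
  apply/subsetP => e he; move: (he); rewrite inE => /andP[eE ecr].
  rewrite !inE eE andbT; case: (eqVneq e b) => [_|eb]; first by rewrite orbT.
  rewrite orbF; apply/negP => eT.
  by move: ecr; rewrite inv ?eqxx // !inE eb eT.
split=> //; apply: (L1c wfH sT cT bT) => //.
by apply/set0Pn; exists b.
Qed.

Lemma fund_cycle e : e \in eset H -> e \notin T ->
  exists s, [/\ is_cycle_trav H s, cyc_edges s \subset T :|: [set e] & (e, true) \in s].
Proof.
move=> he eT; apply: path_cycle => //.
by case: (wfH he) => hs ht; apply: cT.
Qed.

End Tree3.

Lemma pair_cross H X s a c : cyc_ok H s -> a != c ->
  (forall y, y \in cyc_edges s -> y \in cut H X -> (y == a) || (y == c)) ->
  ((a \in cyc_edges s) && (a \in cut H X)) = ((c \in cyc_edges s) && (c \in cut H X)).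
Proof.
move=> ok ac hy.
case hA: ((a \in cyc_edges s) && (a \in cut H X));
case hC: ((c \in cyc_edges s) && (c \in cut H X)) => //.
- exfalso; apply: (cross_one (X := X) (b := a) ok); apply/setP => z; rewrite in_setI in_set1.
  apply/idP/idP => [/andP[z1 z2]|/eqP ->]; last by move: hA => /andP[-> ->].
  case/orP: (hy z z1 z2) => [//|/eqP zc]; by move: hC; rewrite -zc z1 z2.
- exfalso; apply: (cross_one (X := X) (b := c) ok); apply/setP => z; rewrite in_setI in_set1.
  apply/idP/idP => [/andP[z1 z2]|/eqP ->]; last by move: hC => /andP[-> ->].
  case/orP: (hy z z1 z2) => [/eqP za|//]; by move: hA; rewrite -za z1 z2.
Qed.

Lemma pair_sign H X s a c : cyc_ok H s -> a != c ->
  (forall y, y \in cyc_edges s -> y \in cut H X -> (y == a) || (y == c)) ->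
  a \in cyc_edges s -> a \in cut H X -> c \in cyc_edges s -> c \in cut H X ->
  (cyc_pos s a == cyc_pos s c) = (cut_pos H X a != cut_pos H X c).
Proof.
move=> ok ac hy a1 a2 c1 c2; apply: cross_two => //.
apply/setP => y; rewrite in_setI in_set2.
apply/idP/idP => [/andP[y1 y2]|/orP[/eqP ->|/eqP ->]]; last 2 first.
- by rewrite a1.
- by rewrite c1.
exact: hy.
Qed.

Section Dual.
Variables (H : digraph V E) (T : {set E}) (s : seq (E * bool)) (x b : E) (X : {set V}).
Hypotheses (ok : cyc_ok H s) (sx : cyc_edges s \subset T :|: [set x]) (xT : x \notin T)
  (bT : b \in T) (sX : cut H X \subset (eset H :\: T) :|: [set b]).

Let hy : forall y, y \in cyc_edges s -> y \in cut H X -> (y == b) || (y == x).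
Proof.
move=> y y1 y2; move: (subsetP sx y y1) (subsetP sX y y2); rewrite !inE.
case/orP=> [yT|->]; last by rewrite orbT.
by rewrite yT /= => ->.
Qed.

Let bx : b != x. Proof. by apply: contraNneq xT => <-. Qed.

Lemma dual_mem : x \in cyc_edges s -> b \in cut H X ->
  (b \in cyc_edges s) = (x \in cut H X).
Proof.
move=> xs bX; have := pair_cross ok bx hy.
by rewrite xs bX andbT.
Qed.

Lemma dual_sign : x \in cyc_edges s -> b \in cut H X -> b \in cyc_edges s -> x \in cut H X ->
  (cyc_pos s b == cyc_pos s x) = (cut_pos H X b != cut_pos H X x).
Proof. by move=> xs bX bs xX; apply: pair_sign. Qed.

End Dual.
End Gen3.

Section Main.
Variables (V : finType) (d : Order.disp_t) (E : finOrderType d).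
Variables (H : digraph V E) (T : {set E}) (p : E).
Hypothesis wfH : wf H.
Hypothesis conn : connected H.
Hypothesis fo : fully_optimal H T.
Hypothesis pmin : is_min (eset H) p.

Let stT : spanning_tree H T. Proof. by case: fo. Qed.
Let sT : T \subset eset H. Proof. by case: stT. Qed.
Let cT : connected_via H T. Proof. by case: stT. Qed.
Let critb := proj1 ((proj2 fo) p pmin).
Let crite := proj2 ((proj2 fo) p pmin).

Local Open Scope order_scope.

Lemma src_in_Xf b : src H b \in Xf H T b.
Proof. by rewrite inE connect0. Qed.

Lemma crit_e_true e C : e \in eset H -> e \notin T -> is_cycle_trav H C ->
  cyc_edges C \subset T :|: [set e] -> (e, true) \in C ->
  forall g, is_min (cyc_edges C) g -> [/\ g \in T, g != e & cyc_pos C g = false].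
Proof.
move=> eE eT hC sC eC g gm.
have hg : cyc_pos C e != cyc_pos C g by apply: (crite _ hC sC gm); rewrite inE eE eT.
move: hg; rewrite /cyc_pos eC => hg.
have ge : g != e by apply/eqP => gE; move: hg; rewrite gE eC.
case: gm => gC _; move: (subsetP sC g gC); rewrite !inE (negbTE ge) orbF => ->.
by split=> //; apply/negbTE.
Qed.

Lemma no_dir_walk w : w != [::] -> all (fun z => z.1 \in eset H) w -> all snd w ->
  closed_walk H w -> False.
Proof.
move=> wn wE wf cw.
set W := [set e | e \in map fst w].
have zW : forall z, z \in w -> z.1 \in W by move=> z zw; rewrite inE; apply: map_f.
have zt : forall z, z \in w -> z.2 by move=> z zw; move/allP: wf => /(_ z zw).
have zE : forall z, z \in w -> z.1 \in eset H by move=> z zw; move/allP: wE => /(_ z zw).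
have fin : forall X (z0 : E * bool), z0 \in w -> leaves H X z0 ->
      (forall z, z \in w -> enters H X z = false) -> False.
  move=> X z0 z0w lz0 hen; have := orth X cw.
  have -> : count (enters H X) w = 0.
    apply/eqP; rewrite -leqn0 leqNgt -has_count; apply/hasPn => z zw.
    by rewrite hen.
  move/eqP; rewrite -leqn0 leqNgt -has_count => /negP; apply; apply/hasP.
  by exists z0.
case: (boolP [exists e in W, e \notin T]) => [/existsP[e0 /andP[e0W e0T]]|].
- have e0E : e0 \in eset H.
    by move: e0W; rewrite inE => /mapP[z zw ->]; apply: zE.
  set M := [set y in T | [exists e in W :\: T, e \in cut H (Xf H T y)]].
  have key : forall e, e \in W -> e \notin T -> forall C, is_cycle_trav H C ->
      cyc_edges C \subset T :|: [set e] -> (e, true) \in C ->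
      forall g, is_min (cyc_edges C) g -> g \in M /\ g \in cyc_edges C.
    move=> e eW eT C hC sC eC g gm.
    have eE : e \in eset H by move: eW; rewrite inE => /mapP[z zw ->]; apply: zE.
    case: (crit_e_true eE eT hC sC eC gm) => gT ge gpos.
    case: (fund_cocycle wfH stT gT) => gX sX _.
    have gC : g \in cyc_edges C by case: gm.
    have := dual_mem (cycle_ok hC) sC eT gT sX (in_cyc_edges2 eC) gX.
    rewrite gC => eX; split=> //.
    rewrite inE gT /=; apply/existsP; exists e; by rewrite in_setD eT eW -eX.
  have Mn : M != set0.
    case: (fund_cycle wfH stT e0E e0T) => C0 [hC0 sC0 eC0].
    case: (ex_min (A := cyc_edges C0)).
      by apply/set0Pn; exists e0; apply: in_cyc_edges2 eC0.
    move=> g0 g0m; case: (key e0 e0W e0T C0 hC0 sC0 eC0 g0 g0m) => g0M _.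
    by apply/set0Pn; exists g0.
  case: (ex_min Mn) => x [xM xmin].
  move: (xM); rewrite inE => /andP[xT /existsP[e1 /andP[e1W e1X]]].
  set X := Xf H T x.
  case: (fund_cocycle wfH stT xT) => xX sX _.
  have cpx : cut_pos H X x by rewrite /cut_pos src_in_Xf.
  have pos : forall e, e \in W -> e \notin T -> e \in cut H X -> cut_pos H X e.
    move=> e eW eT eX.
    have eE : e \in eset H by move: eW; rewrite inE => /mapP[z zw ->]; apply: zE.
    case: (fund_cycle wfH stT eE eT) => C [hC sC eC].
    have xC : x \in cyc_edges C.
      by rewrite (dual_mem (cycle_ok hC) sC eT xT sX (in_cyc_edges2 eC) xX).
    case: (ex_min (A := cyc_edges C)); first by apply/set0Pn; exists x.
    move=> g gm; case: (key e eW eT C hC sC eC g gm) => gM gC.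
    have gx : g = x by apply/le_anti; rewrite (proj2 gm x xC) xmin.
    case: (crit_e_true eE eT hC sC eC gm) => _ _; rewrite gx => cpC.
    have := dual_sign (cycle_ok hC) sC eT xT sX (in_cyc_edges2 eC) xX xC eX.
    have uC : uniq (map fst C) by case: hC.
    by rewrite cpC (cyc_posE uC eC) cpx; case: (cut_pos H X e).
  have e1T : e1 \notin T by move: e1W; rewrite inE => /andP[].
  have e1W' : e1 \in W by move: e1W; rewrite inE => /andP[].
  move: (e1W'); rewrite inE => /mapP[z1 z1w e1z].
  apply: (fin X z1 z1w).
    rewrite leavesE ?zE // -e1z e1X (zt _ z1w) eq_sym.
    by rewrite (pos e1 e1W' e1T e1X).
  move=> z zw; rewrite entersE ?zE // (zt _ zw).
  case: (boolP (z.1 \in cut H X)) => //= zX.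
  case: (boolP (z.1 \in T)) => zT.
    have : z.1 \in (eset H :\: T) :|: [set x] by apply: (subsetP sX).
    by rewrite !inE zT /= => /eqP ->; rewrite cpx.
  by rewrite (pos _ (zW _ zw) zT zX).
- move/existsPn => hall.
  case: w wn wE wf cw W zW zt zE fin hall => [//|z0 w'] _ _ _ _ W zW zt zE fin hall.
  have z0w : z0 \in z0 :: w' by exact: mem_head.
  have aT : z0.1 \in T by move: (hall z0.1); rewrite zW //= negbK.
  case: (fund_cocycle wfH stT aT) => aX sX _.
  have cpa : cut_pos H (Xf H T z0.1) z0.1 by rewrite /cut_pos src_in_Xf.
  apply: (fin (Xf H T z0.1) z0 z0w).
    by rewrite leavesE ?zE // aX (zt _ z0w) cpa.
  move=> z zw; rewrite entersE ?zE // (zt _ zw).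
  case: (boolP (z.1 \in cut H (Xf H T z0.1))) => //= zX.
  have zT : z.1 \in T by move: (hall z.1); rewrite zW //= negbK.
  have : z.1 \in (eset H :\: T) :|: [set z0.1] by apply: (subsetP sX).
  by rewrite !inE zT /= => /eqP ->; rewrite cpa.
Qed.


Lemma no_dir_cut X : cut H X != set0 -> (forall e, e \in cut H X -> cut_pos H X e) ->
  p \notin cut H X -> False.
Proof.
move=> nX posX pX.
case: (tree_cross wfH sT cT nX) => b0 b0T b0X.
have hb : forall b, b \in T -> b \in cut H X -> forall g, is_min (cut H (Xf H T b)) g ->
    [/\ g \in eset H, g \notin T, g != b & cut_pos H (Xf H T b) g = false].
  move=> b bT bX g gm.
  case: (fund_cocycle wfH stT bT) => bXb sXb cXb.
  have bp : b != p by apply: contraNneq pX => <-.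
  have := critb bT bp cXb sXb gm.
  rewrite {1}/cut_pos src_in_Xf => hg.
  have gf : cut_pos H (Xf H T b) g = false by move: hg; case: (cut_pos _ _ g).
  have gb : g != b by apply/eqP => gE; move: gf; rewrite gE /cut_pos src_in_Xf.
  case: gm => gc _; move: (subsetP sXb g gc); rewrite !inE (negbTE gb) orbF.
  by case/andP => -> ->.
set M := [set y in eset H :\: T | [exists b in T :&: cut H X, y \in cut H (Xf H T b)]].
have Mn : M != set0.
  case: (fund_cocycle wfH stT b0T) => bXb _ _.
  case: (ex_min (A := cut H (Xf H T b0))); first by apply/set0Pn; exists b0.
  move=> g gm; case: (hb b0 b0T b0X g gm) => gE gT _ _.
  apply/set0Pn; exists g; rewrite inE in_setD gT gE /=.
  by apply/existsP; exists b0; rewrite in_setI b0T b0X; case: gm.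
case: (ex_min Mn) => x [xM xmin].
move: (xM); rewrite inE in_setD => /andP[/andP[xT xE] /existsP[b1 /andP[b1TX xb1]]].
move: b1TX; rewrite in_setI => /andP[b1T b1X].
case: (fund_cycle wfH stT xE xT) => C [hC sC xC].
have uC : uniq (map fst C) by case: hC.
have fwd : forall y, y \in T -> y \in cut H X -> y \in cyc_edges C -> cyc_pos C y = true.
  move=> y yT yX yC.
  case: (fund_cocycle wfH stT yT) => yXy sXy _.
  have xXy : x \in cut H (Xf H T y).
    by rewrite -(dual_mem (cycle_ok hC) sC xT yT sXy (in_cyc_edges2 xC) yXy).
  case: (ex_min (A := cut H (Xf H T y))); first by apply/set0Pn; exists x.
  move=> g gm; case: (hb y yT yX g gm) => gE gT gy gf.
  have gM : g \in M.
    rewrite inE in_setD gT gE /=; apply/existsP; exists y.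
    by rewrite in_setI yT yX; case: gm.
  have gx : g = x by apply/le_anti; rewrite (proj2 gm x xXy) xmin.
  have := dual_sign (cycle_ok hC) sC xT yT sXy (in_cyc_edges2 xC) yXy yC xXy.
  rewrite (cyc_posE uC xC) -gx gf {1}/cut_pos src_in_Xf /=.
  by case: (cyc_pos C y).
have allE : all (fun z => z.1 \in eset H) C by case: hC.
have zE : forall z, z \in C -> z.1 \in eset H by move=> z zC; move/allP: allE => /(_ z zC).
have cw : closed_walk H C by case: hC.
have := orth X cw.
have -> : count (enters H X) C = 0.
  apply/eqP; rewrite -leqn0 leqNgt -has_count; apply/hasPn => z zC.
  rewrite entersE ?zE //.
  case: (boolP (z.1 \in cut H X)) => //= zX.
  case: z zC zX => y b /= yC yX.
  have yC' : y \in cyc_edges C by apply: in_cyc_edges2 yC.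
  move: (subsetP sC y yC'); rewrite !inE => /orP[yT|/eqP yx].
    by rewrite -(cyc_posE uC yC) (fwd y yT yX yC') posX.
  by rewrite -(cyc_posE uC yC) yx (cyc_posE uC xC) -yx posX.
case: (fund_cocycle wfH stT b1T) => b1Xb sXb _.
have b1C : b1 \in cyc_edges C.
  by rewrite (dual_mem (cycle_ok hC) sC xT b1T sXb (in_cyc_edges2 xC) b1Xb).
have b1t : (b1, true) \in C by have := fwd b1 b1T b1X b1C.
move/eqP; rewrite -leqn0 leqNgt -has_count => /negP; apply; apply/hasP.
exists (b1, true) => //; rewrite leavesE /=; [by rewrite b1X posX | exact: (zE _ b1t)].
Qed.

Lemma dadj1 e : e \in eset H -> dadj H (src H e) (tgt H e).
Proof. by move=> eE; apply/existsP; exists e; rewrite eE !eqxx. Qed.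

Lemma no_back e : e \in eset H -> connect (dadj H) (tgt H e) (src H e) -> False.
Proof.
move=> eE /connectP[q hq hl].
have gp := @good_dadj _ _ _ H.
apply: (no_dir_walk (w := (e, true) :: mksteps H (pick_dadj H (eset H)) (tgt H e) q)) => //.
- by rewrite /= eE /=; have := steps_S gp hq.
- rewrite /=; apply: steps_fwd => x y g; rewrite /pick_dadj.
  by case: pickP => // g' /andP[_ /andP[/eqP h _]] [<-].
- by have := close_walk gp hq (esym hl).
Qed.

Let pE : p \in eset H. Proof. by case: pmin. Qed.

Lemma reach_from z : z \in vset H -> connect (dadj H) (src H p) z.
Proof.
move=> zV; apply/negPn/negP => nz.
set R := [set y | connect (dadj H) (src H p) y].
case: (wfH pE) => spV tpV.
apply: (no_dir_cut (X := ~: R)).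
- case: (cc (X := ~: R) conn zV spV); first by rewrite !inE.
    by rewrite !inE connect0.
  by move=> g gE hg; apply/set0Pn; exists g; rewrite inE gE.
- move=> e; rewrite inE => /andP[eE cr]; rewrite /cut_pos.
  rewrite in_setC; apply/negP => sR; move: cr; rewrite !in_setC sR /=.
  have tR : tgt H e \in R.
    by move: sR; rewrite !inE => sR; rewrite (connect_trans sR (connect1 (dadj1 eE))).
  by rewrite tR.
- by rewrite inE pE /= !inE connect0 (connect1 (dadj1 pE)).
Qed.

Lemma reach_to z : z \in vset H -> connect (dadj H) z (tgt H p).
Proof.
move=> zV; apply/negPn/negP => nz.
set R := [set y | connect (dadj H) y (tgt H p)].
case: (wfH pE) => spV tpV.
apply: (no_dir_cut (X := R)).
- case: (cc (X := R) conn tpV zV); first by rewrite !inE connect0.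
    by rewrite !inE.
  by move=> g gE hg; apply/set0Pn; exists g; rewrite inE gE.
- move=> e; rewrite inE => /andP[eE cr]; rewrite /cut_pos.
  apply/negPn/negP => sR; move: cr; rewrite (negbTE sR).
  case: (boolP (tgt H e \in R)) => //; rewrite !inE => tR _.
  by move: sR; rewrite !inE (connect_trans (connect1 (dadj1 eE)) tR).
- by rewrite inE pE /= !inE connect0 (connect_trans (connect1 (dadj1 pE)) (connect0 _ _)).
Qed.

Lemma crit_bipolar : bipolar H p.
Proof.
case: (wfH pE) => spV tpV.
split => //.
- case=> s [hs fw]; case: hs => ne ae _ _ cw; exact: no_dir_walk ne ae fw cw.
exists (src H p), (tgt H p); split; [|split]; last by left.
- move=> v; split.
  + case=> vV hin; apply/eqP/negPn/negP => vp.
    apply: (no_dir_cut (X := [set v])).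
    * case: (cc (X := [set v]) conn vV spV); first by rewrite inE.
        by rewrite inE eq_sym.
      by move=> g gE hg; apply/set0Pn; exists g; rewrite inE gE.
    * move=> e; rewrite inE => /andP[eE cr]; rewrite /cut_pos.
      move: cr; rewrite !inE; have := hin e eE.
      by case: (tgt H e == v); case: (src H e == v).
    * rewrite inE pE /= !inE (negbTE (hin p pE)).
      by rewrite [src H p == v]eq_sym (negbTE vp).
  + move=> ->; split => // e eE; apply/eqP => he.
    apply: (no_back eE); rewrite he; apply: reach_from; by case: (wfH eE).
- move=> v; split.
  + case=> vV hout; apply/eqP/negPn/negP => vt.
    apply: (no_dir_cut (X := ~: [set v])).
    * case: (cc (X := ~: [set v]) conn tpV vV); first by rewrite !inE eq_sym.
        by rewrite !inE eqxx.
      by move=> g gE hg; apply/set0Pn; exists g; rewrite inE gE.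
    * move=> e; rewrite inE => /andP[eE cr]; rewrite /cut_pos.
      by rewrite !inE (hout e eE).
    * rewrite inE pE /= !inE (hout p pE).
      by rewrite [tgt H p == v]eq_sym (negbTE vt).
  + move=> ->; split => // e eE; apply/eqP => he.
    apply: (no_back eE); rewrite he; apply: reach_to; by case: (wfH eE).
Qed.

End Main.

Section Minors.
Variables (V : finType) (d : Order.disp_t) (E : finOrderType d).
Variables (G : digraph V E) (T : {set E}) (w : E).
Implicit Types (X : {set V}).
Hypothesis wfG : wf G.
Hypothesis fo : fully_optimal G T.
Hypothesis wmax : is_max (eset G) w.

Let stT : spanning_tree G T. Proof. by case: fo. Qed.
Let sT : T \subset eset G. Proof. by case: stT. Qed.
Let cT : connected_via G T. Proof. by case: stT. Qed.
Let aT : forall s, is_cycle_trav G s -> ~ (cyc_edges s \subset T). Proof. by case: stT. Qed.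
Let wE : w \in eset G. Proof. by case: wmax. Qed.

Local Open Scope order_scope.

Lemma min_sub p' : is_min (eset G :\ w) p' -> is_min (eset G) p'.
Proof.
case=> pin pm; move: (pin); rewrite in_setD1 => /andP[_ pE]; split=> // y yE.
case: (eqVneq y w) => [->|yw]; first by case: wmax => _ ->.
by apply: pm; rewrite in_setD1 yw.
Qed.

Lemma del_cyc s : is_cycle_trav (delete G w) s -> is_cycle_trav G s.
Proof.
case=> ne ae u1 u2 cw; split=> //.
by apply: sub_all ae => z /=; rewrite in_setD1 => /andP[].
Qed.

Lemma del_cut X : cut (delete G w) X = cut G X :\ w.
Proof. by apply/setP => e; rewrite !inE /= andbA. Qed.

Lemma del_fo : w \notin T -> fully_optimal (delete G w) T.
Proof.
move=> wT; case: fo => _ crit; split.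
- split.
  + apply/subsetP => e eT; rewrite /= in_setD1 (subsetP sT _ eT) andbT.
    by apply: contraNneq wT => <-.
  + by move=> u v hu hv; apply: cT.
  + by move=> s hs; apply: aT; apply: del_cyc.
- move=> p' pm; case: (crit p' (min_sub pm)) => cb ce; split.
  + move=> b bT bp X cX sX f fm.
    have nX : cut G X != set0.
      case: cX => /set0Pn[e eX] _; apply/set0Pn; exists e.
      by move: eX; rewrite del_cut in_setD1 => /andP[].
    have sX' : cut G X \subset (eset G :\: T) :|: [set b].
      apply/subsetP => e eX; case: (eqVneq e w) => [->|ew].
        by rewrite !inE wT wE.
      have : e \in cut (delete G w) X by rewrite del_cut in_setD1 ew.
      move/(subsetP sX); rewrite !inE /=.
      by case/orP=> [/andP[-> /andP[_ ->]]|->]; rewrite ?orbT.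
    have cX' := L1c wfG sT cT bT nX sX'.
    have fm' : is_min (cut G X) f.
      case: fm => fX fmin; have fX' : f \in cut G X.
        by move: fX; rewrite del_cut in_setD1 => /andP[].
      split=> // y yX; case: (eqVneq y w) => [->|yw].
        by case: wmax => _ ->//; move: fX'; rewrite inE => /andP[].
      by apply: fmin; rewrite del_cut in_setD1 yw.
    exact: cb b bT bp X cX' sX' f fm'.
  + move=> e eH s hs sS f fm; apply: ce => //; last exact: del_cyc.
    by move: eH; rewrite !inE /= => /andP[-> /andP[_ ->]].
Qed.

Hypothesis wT : w \in T.
Let u := src G w.
Let v := tgt G w.
Let fm z := if z == u then v else z.

Lemma uv : u != v.
Proof.
apply/eqP => e; apply: (aT (s := [:: (w, true)])).
- split => //=; [by rewrite wE | by rewrite /closed_walk /= /st_start /st_end /= -/u -/v e].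
- by apply/subsetP => y; rewrite inE => /mapP[z]; rewrite inE => /eqP -> ->.
Qed.

Lemma con_src e : src (contract G w) e = fm (src G e). Proof. by []. Qed.
Lemma con_tgt e : tgt (contract G w) e = fm (tgt G e). Proof. by []. Qed.
Lemma con_vset : vset (contract G w) = vset G :\ u.
Proof. by rewrite /= -/u -/v (negbTE uv). Qed.
Lemma con_eset : eset (contract G w) = eset G :\ w. Proof. by []. Qed.

Lemma fm_compat X : (u \in X) = (v \in X) -> forall z, (fm z \in X) = (z \in X).
Proof. by move=> h z; rewrite /fm; case: eqP => // ->. Qed.

Lemma con_cut X : (u \in X) = (v \in X) ->
  cut (contract G w) X = cut G X :\ w /\
  forall e, cut_pos (contract G w) X e = cut_pos G X e.
Proof.
move=> h; split; last by move=> e; rewrite /cut_pos con_src fm_compat.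
apply/setP => e; rewrite !inE con_src con_tgt !fm_compat //.
by rewrite andbA.
Qed.

Definition Xlift X := if v \in X then X :|: [set u] else X :\ u.

Lemma Xlift_mem X z : (z \in Xlift X) = (fm z \in X).
Proof.
rewrite /Xlift /fm; case: (eqVneq z u) => [->|zu].
  by case: (boolP (v \in X)) => h; rewrite !inE ?eqxx ?orbT // andFb.
by case: (v \in X); rewrite !inE (negbTE zu) ?orbF ?andTb.
Qed.

Lemma con_cut2 X : cut G (Xlift X) = cut (contract G w) X /\
  forall e, cut_pos G (Xlift X) e = cut_pos (contract G w) X e.
Proof.
split; last by move=> e; rewrite /cut_pos Xlift_mem.
apply/setP => e; rewrite !inE con_src con_tgt !Xlift_mem.
case: (eqVneq e w) => [->|ew] //=.
have e1 : fm u = v by rewrite /fm eqxx.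
have e2 : fm v = v by rewrite /fm eq_sym (negbTE uv).
by change (src G w) with u; change (tgt G w) with v; rewrite e1 e2 eqxx andbF.
Qed.

Lemma fund_compat y : y \in T -> y != w ->
  (u \in Xf G T y) = (v \in Xf G T y).
Proof.
move=> yT yw; case: (fund_cocycle wfG stT yT) => _ sX _.
apply/eqP; apply/negPn/negP => h.
have : w \in cut G (Xf G T y) by rewrite inE wE.
by move/(subsetP sX); rewrite !inE wT /= eq_sym (negbTE yw).
Qed.

Lemma con_path x q : path (adj G T) x q ->
  connect (adj (contract G w) (T :\ w)) (fm x) (fm (last x q)).
Proof.
elim: q x => [|y q IH] x /=; first by move=> _; apply: connect0.
case/andP=> hxy hq; apply: connect_trans (IH y hq).
case: (adjP hxy) => g gT hg.
have e1 : fm u = v by rewrite /fm eqxx.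
have e2 : fm v = v by rewrite /fm eq_sym (negbTE uv).
case: (eqVneq g w) => [gw|gw].
  rewrite gw in hg; case: hg => [[<- <-]|[<- <-]];
  change (src G w) with u; change (tgt G w) with v;
  by rewrite e1 e2 connect0.
apply: connect1; apply/existsP; exists g; rewrite in_setD1 gw gT con_src con_tgt.
by case: hg => [[-> ->]|[-> ->]]; rewrite !eqxx ?orbT.
Qed.

Lemma con_acyc s : is_cycle_trav (contract G w) s -> cyc_edges s \subset T :\ w -> False.
Proof.
move=> hs ss; case: (hs) => ne _ _ _ _.
case: s ne hs ss => [//|z0 s'] _ hs ss.
have z0s : z0.1 \in cyc_edges (z0 :: s') by rewrite inE /= mem_head.
move: (subsetP ss _ z0s); rewrite in_setD1 => /andP[bw bT].
case: (fund_cocycle wfG stT bT) => bX sX _.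
case: (con_cut (fund_compat bT bw)) => hc _.
apply: (cross_one (X := Xf G T z0.1) (b := z0.1) (cycle_ok hs)).
apply/setP => y; rewrite in_setI in_set1 hc in_setD1.
apply/idP/idP => [/andP[yS /andP[yw yX]]|/eqP ->]; last by rewrite z0s bw bX.
move: (subsetP ss _ yS); rewrite in_setD1 => /andP[_ yT].
by move: (subsetP sX _ yX); rewrite !inE yT /=.
Qed.

Lemma con_fund y : y \in T -> y != w ->
  [/\ y \in cut (contract G w) (Xf G T y),
      cut (contract G w) (Xf G T y) \subset (eset (contract G w) :\: (T :\ w)) :|: [set y],
      cut (contract G w) (Xf G T y) = cut G (Xf G T y) :\ w
    & forall e, cut_pos (contract G w) (Xf G T y) e = cut_pos G (Xf G T y) e].
Proof.
move=> yT yw; case: (fund_cocycle wfG stT yT) => yX sXy _.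
case: (con_cut (fund_compat yT yw)) => hc hp.
split => //; rewrite hc; first by rewrite in_setD1 yw yX.
apply/subsetP => z; rewrite in_setD1 => /andP[zw zX]; move: (subsetP sXy z zX).
rewrite !inE zw /=.
by case: (z \in T); case: (z \in eset G); case: (z == y).
Qed.

Lemma con_fo : fully_optimal (contract G w) (T :\ w).
Proof.
case: fo => _ crit.
have ssT : T :\ w \subset eset (contract G w).
  by apply/subsetP => e; rewrite !in_setD1 => /andP[-> /(subsetP sT) ->].
split.
- split => //.
  + move=> a c; rewrite con_vset !in_setD1 => /andP[au aV] /andP[cu cV].
    case/connectP: (cT aV cV) => q hq hl.
    by have := con_path hq; rewrite -hl /fm (negbTE au) (negbTE cu).
  + move=> s hs ss; exact: con_acyc hs ss.
- move=> p' pm; case: (crit p' (min_sub pm)) => cb ce; split.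
  + move=> b bT bp X cX sX f fmn.
    move: bT; rewrite in_setD1 => /andP[bw bT].
    case: (con_cut2 X) => hc hp.
    have nX : cut G (Xlift X) != set0 by rewrite hc; case: cX.
    have sX' : cut G (Xlift X) \subset (eset G :\: T) :|: [set b].
      rewrite hc; apply/subsetP => e eX; move: (subsetP sX e eX).
      rewrite !inE /=.
      by case: (e == w); case: (e \in T); case: (e \in eset G); case: (e == b).
    have cX' := L1c wfG sT cT bT nX sX'.
    have fm' : is_min (cut G (Xlift X)) f by rewrite hc.
    by have := cb b bT bp _ cX' sX' f fm'; rewrite !hp.
  + move=> e eH s hs sS f fmin.
    have ew : e != w by move: eH; rewrite !inE; case: (e == w).
    have eE : e \in eset G by move: eH; rewrite !inE; case/andP=> _ /andP[].
    have eT : e \notin T by move: eH; rewrite !inE ew /=; case/andP.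
    have es : e \in cyc_edges s.
      apply/negPn/negP => ne; apply: (con_acyc hs); apply/subsetP => y ys.
      move: (subsetP sS y ys); rewrite in_setU in_set1 => /orP[//|/eqP ye].
      by move: ne; rewrite -ye ys.
    case: (fund_cycle wfG stT eE eT) => C [hC sC eC].
    have uC : uniq (map fst C) by case: hC.
    case: (ex_min (A := cyc_edges C)); first by apply/set0Pn; exists e; apply: in_cyc_edges2 eC.
    move=> g gm.
    have pmG := min_sub pm.
    case: (crit_e_true fo pmG eE eT hC sC eC gm) => gT ge gpos.
    have eC' : e \in cyc_edges C by apply: in_cyc_edges2 eC.
    have gw : g != w.
      apply/eqP => gw'; move: ge; rewrite gw' => we.
      have h1 : (w <= e)%O by case: gm => _; rewrite gw' => ->.
      have h2 : (e <= w)%O by case: wmax => _ ->.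
      by move: we; rewrite (@le_anti _ _ w e) ?h1 ?h2 ?eqxx.
    have eTw : e \notin T :\ w by rewrite in_setD1 (negbTE eT) andbF.
    have K : forall y, y \in T -> y != w -> (y \in cyc_edges s) = (y \in cyc_edges C).
      move=> y yT yw.
      case: (fund_cocycle wfG stT yT) => yX sXy _.
      case: (con_fund yT yw) => yH sXH hc hp.
      have yTw : y \in T :\ w by rewrite in_setD1 yw yT.
      rewrite (dual_mem (cycle_ok hs) sS eTw yTw sXH es yH).
      rewrite (dual_mem (cycle_ok hC) sC eT yT sXy eC' yX).
      by rewrite hc in_setD1 ew.
    have gC : g \in cyc_edges C by case: gm.
    have gs : g \in cyc_edges s by rewrite K.
    have fg : f = g.
      case: fmin => fs fmn.
      have fleg := fmn g gs.
      case: (eqVneq f e) => [fe|fe].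
        exfalso; move: ge; rewrite (@le_anti _ _ g e) ?eqxx //.
        by case: gm => _ ->//=; rewrite -fe fleg.
      have : f \in (T :\ w) :|: [set e] by apply: (subsetP sS).
      rewrite in_setU in_set1 (negbTE fe) orbF in_setD1 => /andP[fw fT].
      have fC : f \in cyc_edges C by rewrite -K.
      by apply/le_anti; rewrite fleg; case: gm => _ ->.
    rewrite fg.
    case: (fund_cocycle wfG stT gT) => gX sXg _.
    case: (con_fund gT gw) => gH sXH hc hp.
    have gTw : g \in T :\ w by rewrite in_setD1 gw gT.
    have eXg : e \in cut G (Xf G T g).
      by rewrite -(dual_mem (cycle_ok hC) sC eT gT sXg eC' gX).
    have eH' : e \in cut (contract G w) (Xf G T g) by rewrite hc in_setD1 ew.
    have h1 := dual_sign (cycle_ok hC) sC eT gT sXg eC' gX gC eXg.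
    rewrite gpos (cyc_posE uC eC) /= in h1.
    have h2 := dual_sign (cycle_ok hs) sS eTw gTw sXH es gH gs eH'.
    rewrite !hp in h2.
    move: h1 h2; case: (cyc_pos s g); case: (cyc_pos s e);
    by case: (cut_pos G (Xf G T g) g); case: (cut_pos G (Xf G T g) e).
Qed.

Lemma con_wf : wf (contract G w).
Proof.
move=> e; rewrite con_eset in_setD1 => /andP[ew eE].
rewrite con_vset con_src con_tgt; case: (wfG eE) => hs ht.
case: (wfG wE) => _ hv.
have hfm : forall z, z \in vset G -> fm z \in vset G :\ u.
  move=> z zV; rewrite /fm; case: eqP => [_|/eqP zu]; rewrite in_setD1.
    by rewrite eq_sym uv hv.
  by rewrite zu zV.
by rewrite !hfm.
Qed.

End Minors.

Lemma fo_connected (V : finType) (d : Order.disp_t) (E : finOrderType d)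
  (H : digraph V E) T : fully_optimal H T -> connected H.
Proof.
case=> [[sT cT _] _] a c ha hc; apply: (connect_adj_sub sT); exact: cT.
Qed.

Unset Implicit Arguments.
Theorem lemma3p1 (V : finType) (d : Order.disp_t) (E : finOrderType d)
  (G : digraph V E) (p w : E) (T : {set E}) :
  wf G -> connected G -> 2 <= #|eset G| ->
  is_min (eset G) p -> is_max (eset G) w ->
  bipolar G p -> fully_optimal G T ->
  (w \in T -> bipolar (contract G w) p /\ fully_optimal (contract G w) (T :\ w)) /\
  (w \notin T -> bipolar (delete G w) p /\ fully_optimal (delete G w) T) /\
  (bipolar (contract G w) p \/ bipolar (delete G w) p).
Proof.
move=> wfG connG card2 pmin wmax _ fo.
have pE : p \in eset G by case: pmin.
have wE : w \in eset G by case: wmax.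
have pw : p != w.
  apply/eqP => pw.
  have : eset G \subset [set p].
    apply/subsetP => y yE; rewrite in_set1; apply/eqP/le_anti.
    case: pmin => _ ->; rewrite // andbT pw.
    by case: wmax => _ ->.
  move/subset_leq_card; rewrite cards1 => h.
  by have := leq_trans card2 h.
have pminW : is_min (eset G :\ w) p.
  split; first by rewrite in_setD1 pw pE.
  by move=> y; rewrite in_setD1 => /andP[_ yE]; case: pmin => _ ->.
have delP : w \notin T -> bipolar (delete G w) p /\ fully_optimal (delete G w) T.
  move=> wT; have foD := del_fo wfG fo wmax wT.
  split => //; apply: (crit_bipolar (T := T)) => //.
  - by move=> e; rewrite /= in_setD1 => /andP[_ eE]; exact: wfG eE.
  - exact: fo_connected foD.
have conP : w \in T -> bipolar (contract G w) p /\ fully_optimal (contract G w) (T :\ w).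
  move=> wT; have foC := con_fo wfG fo wmax wT.
  split => //; apply: (crit_bipolar (T := T :\ w)) => //.
  - exact: con_wf wfG fo wmax wT.
  - exact: fo_connected foC.
split => //; split => //.
case: (boolP (w \in T)) => wT; [left; exact: (conP wT).1 | right; exact: (delP wT).1].
Qed.
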